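(* For every integer $n\ge 1$, let \[ R'_n:=\sum_{k=n}^{\infty}\frac{(-1)^{k-1}}{k}. \] Then \begin{align*} R'_{n} =(-1)^{\,n-1}\,(2n-1)!\;\sum_{k=0}^{\infty}\frac{1}{16^{k}}\Bigg[&\frac{1}{(8k+1)_{2n}}+\frac{1}{(8k+2)_{2n}}+\frac{1}{2\,(8k+3)_{2n}}\\ &-\frac{1}{4\,(8k+5)_{2n}}-\frac{1}{4\,(8k+6)_{2n}}-\frac{1}{8\,(8k+7)_{2n}}\Bigg]. \end{align*}
   Context: For a real number $a$ and integer $m\ge 0$, $(a)_m$ denotes the rising factorial (Pochhammer symbol): $(a)_0:=1$ and $(a)_m:=a(a+1)\cdots(a+m-1)=\Gamma(a+m)/\Gamma(a)$. Note $R'_1=\log 2$. *)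

(* Defs.v *)
From Stdlib Require Import Reals Factorial.
From Coquelicot Require Import Coquelicot.
Open Scope R_scope.

Fixpoint poch (a : R) (m : nat) : R :=
  match m with
  | O => 1
  | S m' => poch a m' * (a + INR m')
  end.

Definition bbp_term (n k : nat) : R :=
  / 16 ^ k *
  ( / poch (8 * INR k + 1) (2 * n)
  + / poch (8 * INR k + 2) (2 * n)
  + / (2 * poch (8 * INR k + 3) (2 * n))
  - / (4 * poch (8 * INR k + 5) (2 * n))
  - / (4 * poch (8 * INR k + 6) (2 * n))
  - / (8 * poch (8 * INR k + 7) (2 * n)) ).

(* Main.v *)
Require Import Defs.
From Stdlib Require Import Reals Factorial Lra Lia.
From Coquelicot Require Import Coquelicot.
Open Scope R_scope.

Lemma poch_pos a m : 0 < a -> 0 < poch a m.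
Proof. intros Ha; induction m; simpl; [lra|]. apply Rmult_lt_0_compat; auto.
  pose proof (pos_INR m); lra. Qed.

Lemma poch_S a m : poch a (S m) = a * poch (a+1) m.
Proof. revert a; induction m; intros a. simpl. ring.
  change (poch a (S (S m))) with (poch a (S m) * (a + INR (S m))).
  change (poch (a+1) (S m)) with (poch (a+1) m * (a + 1 + INR m)).
  rewrite IHm, S_INR. ring. Qed.

Lemma poch_mono a m : 1 <= a -> poch 1 m <= poch a m.
Proof. intros Ha; induction m; simpl; [lra|].
  pose proof (pos_INR m). apply Rmult_le_compat; try lra.
  left; apply poch_pos; lra. Qed.

Lemma poch1 m : poch 1 m = INR (fact m).
Proof. induction m; simpl poch. reflexivity.
  rewrite IHm. change (fact (S m)) with (S m * fact m)%nat.
  rewrite mult_INR, S_INR. ring. Qed.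

Definition F n := INR (fact (2*n-1)).
Definition b n a := F n / poch a (2*n).

Lemma b_rec n a : (1 <= n)%nat -> 0 < a ->
  b (S n) a = b n a - 2 * b n (a+1) + b n (a+2).
Proof.
  intros Hn Ha. destruct n as [|n']; [lia|].
  unfold b, F.
  replace (2 * S (S n') - 1)%nat with (S (S (S (2*n'))))%nat by lia.
  replace (2 * S n' - 1)%nat with (S (2*n'))%nat by lia.
  replace (2 * S (S n'))%nat with (S (S (S (S (2*n')))))%nat by lia.
  replace (2 * S n')%nat with (S (S (2*n')))%nat by lia.
  set (m := (2*n')%nat).
  change (fact (S (S (S m)))) with (S (S (S m)) * (S (S m) * fact (S m)))%nat.
  rewrite !mult_INR.
  assert (E1: poch a (S (S m)) = a*(a+1)*poch (a+2) m).
  { rewrite poch_S, poch_S. replace (a+1+1) with (a+2) by ring. ring. }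
  assert (E2: poch (a+1) (S (S m)) = (a+1)*(poch (a+2) m * (a+2+INR m))).
  { rewrite poch_S. replace (a+1+1) with (a+2) by ring. reflexivity. }
  assert (E3: poch (a+2) (S (S m)) = poch (a+2) m * (a+2+INR m) * (a+2+INR (S m))).
  { reflexivity. }
  assert (E4: poch a (S (S (S (S m))))= a*(a+1)*poch (a+2) m * (a+INR (S (S m))) * (a + INR (S (S (S m))))).
  { change (poch a (S (S (S (S m))))) with (poch a (S (S m)) * (a+INR (S (S m))) * (a + INR (S (S (S m))))).
    rewrite E1. reflexivity. }
  rewrite E1, E2, E3, E4. rewrite !S_INR.
  pose proof (pos_INR m). pose proof (poch_pos (a+2) m ltac:(lra)).
  field. repeat split; lra.
Qed.

Lemma b_rec' n a a1 a2 : (1 <= n)%nat -> 0 < a -> a1 = a+1 -> a2 = a+2 ->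
  b (S n) a = b n a - 2 * b n a1 + b n a2.
Proof. intros; subst; apply b_rec; auto. Qed.

Lemma term_b n k : F n * bbp_term n k = / 16 ^ k *
  (b n (8*INR k+1) + b n (8*INR k+2) + /2 * b n (8*INR k+3)
   - /4 * b n (8*INR k+5) - /4 * b n (8*INR k+6) - /8 * b n (8*INR k+7)).
Proof. unfold bbp_term, b. rewrite !Rinv_mult. unfold Rdiv. ring. Qed.

Definition g n k := 2 * / 16 ^ k * b n (8 * INR k + 1).

Lemma tele n k : (1 <= n)%nat ->
  F n * bbp_term n k + F (S n) * bbp_term (S n) k = g n k - g n (S k).
Proof.
  intros Hn. rewrite !term_b. unfold g.
  pose proof (pos_INR k) as Hk.
  set (x := 8 * INR k).
  rewrite S_INR. replace (8 * (INR k + 1) + 1) with (x + 9) by (unfold x; ring).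
  rewrite (b_rec' n (x+1) (x+2) (x+3)) by (auto; unfold x; lra).
  rewrite (b_rec' n (x+2) (x+3) (x+4)) by (auto; unfold x; lra).
  rewrite (b_rec' n (x+3) (x+4) (x+5)) by (auto; unfold x; lra).
  rewrite (b_rec' n (x+5) (x+6) (x+7)) by (auto; unfold x; lra).
  rewrite (b_rec' n (x+6) (x+7) (x+8)) by (auto; unfold x; lra).
  rewrite (b_rec' n (x+7) (x+8) (x+9)) by (auto; unfold x; lra).
  change (16 ^ S k) with (16 * 16 ^ k). rewrite Rinv_mult.
  field. apply pow_nonzero. lra.
Qed.

Lemma b_bound n a : (1 <= n)%nat -> 1 <= a -> 0 < b n a <= / (2 * INR n).
Proof.
  intros Hn Ha. unfold b, F.
  pose proof (poch_mono a (2*n) Ha) as Hm.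
  pose proof (poch_pos 1 (2*n) ltac:(lra)) as H1.
  pose proof (INR_fact_lt_0 (2*n-1)) as Hf.
  split. apply Rdiv_lt_0_compat; lra.
  apply Rle_trans with (INR (fact (2*n-1)) / poch 1 (2*n)).
  { unfold Rdiv. apply Rmult_le_compat_l; [lra|]. apply Rinv_le_contravar; lra. }
  rewrite poch1. assert (E: fact (2*n) = (2*n * fact (2*n-1))%nat).
  { replace (2*n)%nat with (S (2*n-1)) at 1 2 by lia. reflexivity. }
  rewrite E, !mult_INR. simpl (INR 2).
  right. field. repeat split; try apply INR_fact_neq_0; apply not_0_INR; lia.
Qed.

Lemma term_bound n k : (1 <= n)%nat ->
  Rabs (F n * bbp_term n k) <= (/16)^k * (4 * / (2 * INR n)).
Proof.
  intros Hn. rewrite term_b. pose proof (pos_INR k).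
  pose proof (b_bound n (8*INR k+1) Hn ltac:(lra)).
  pose proof (b_bound n (8*INR k+2) Hn ltac:(lra)).
  pose proof (b_bound n (8*INR k+3) Hn ltac:(lra)).
  pose proof (b_bound n (8*INR k+5) Hn ltac:(lra)).
  pose proof (b_bound n (8*INR k+6) Hn ltac:(lra)).
  pose proof (b_bound n (8*INR k+7) Hn ltac:(lra)).
  rewrite Rabs_mult, pow_inv. rewrite (Rabs_right (/16^k)).
  2:{ left. apply Rinv_0_lt_compat, pow_lt. lra. }
  apply Rmult_le_compat_l. left. apply Rinv_0_lt_compat, pow_lt. lra.
  apply Rabs_le. lra.
Qed.

Lemma geom_series C : is_series (fun k => (/16)^k * C) (16/15 * C).
Proof.
  assert (H: is_series (fun k => (/16)^k) (16/15)).
  { replace (16/15) with (/(1 - /16)) by field. apply is_series_geom.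
    rewrite Rabs_right; lra. }
  apply (is_series_scal C) in H.
  replace (16/15*C) with (scal C (16/15)) by (unfold scal; simpl; unfold mult; simpl; ring).
  eapply is_series_ext; [|exact H]. intros k. unfold scal; simpl; unfold mult; simpl; ring.
Qed.

Lemma exs n : (1 <= n)%nat -> ex_series (fun k => F n * bbp_term n k).
Proof.
  intros Hn. apply (@ex_series_le R_AbsRing R_CompleteNormedModule) with (b := fun k => (/16)^k * (4 * /(2*INR n))).
  - intros k. apply term_bound; auto.
  - eexists. apply geom_series.
Qed.

Lemma exs_bbp n : (1 <= n)%nat -> ex_series (bbp_term n).
Proof.
  intros Hn. pose proof (@ex_series_scal R_AbsRing R_NormedModule (/ F n) _ (exs n Hn)) as H.
  destruct H as [l H]. exists l. eapply is_series_ext; [|exact H].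
  intros k. unfold scal; simpl; unfold mult; simpl. field.
  unfold F. apply INR_fact_neq_0.
Qed.

Lemma A_bound n : (1 <= n)%nat ->
  Rabs (F n * Series (bbp_term n)) <= 16/15 * (4 * /(2*INR n)).
Proof.
  intros Hn. rewrite <- Series_scal_l.
  assert (Hex: ex_series (fun k => Rabs (F n * bbp_term n k))).
  { apply (@ex_series_le R_AbsRing R_CompleteNormedModule) with (b := fun k => (/16)^k * (4 * /(2*INR n))).
    - intros k. unfold norm; simpl. unfold abs; simpl. rewrite Rabs_Rabsolu. apply term_bound; auto.
    - eexists. apply geom_series. }
  eapply Rle_trans. apply Series_Rabs; auto.
  rewrite <- (is_series_unique _ _ (geom_series (4 * /(2*INR n)))).
  apply Series_le. intros k. split. apply Rabs_pos. apply term_bound; auto.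
  eexists. apply geom_series.
Qed.

Lemma b1 n : (1 <= n)%nat -> b n 1 = / (2 * INR n).
Proof.
  intros Hn. unfold b, F. rewrite poch1.
  assert (E: fact (2*n) = (2*n * fact (2*n-1))%nat).
  { replace (2*n)%nat with (S (2*n-1)) at 1 2 by lia. reflexivity. }
  rewrite E, !mult_INR. simpl (INR 2).
  field. repeat split; try apply INR_fact_neq_0; apply not_0_INR; lia.
Qed.

Lemma g_lim n : (1 <= n)%nat -> is_lim_seq (g n) 0.
Proof.
  intros Hn.
  apply is_lim_seq_le_le with (u := fun _ => 0) (w := fun k => (/16)^k * (2 * /(2*INR n))).
  - intros k. unfold g. pose proof (pos_INR k).
    pose proof (b_bound n (8*INR k+1) Hn ltac:(lra)).
    rewrite pow_inv. assert (0 < / 16^k) by (apply Rinv_0_lt_compat, pow_lt; lra).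
    split; nra.
  - apply is_lim_seq_const.
  - replace (Finite 0) with (Rbar_mult 0 (2 * /(2*INR n))) by (simpl; f_equal; ring).
    apply is_lim_seq_scal_r. apply is_lim_seq_geom. rewrite Rabs_right; lra.
Qed.

Lemma psum n N : sum_f_R0 (fun k => g n k - g n (S k)) N = g n 0 - g n (S N).
Proof. induction N; simpl; [ring|]. rewrite IHN. ring. Qed.

Lemma tele_series n : (1 <= n)%nat ->
  is_series (fun k => F n * bbp_term n k + F (S n) * bbp_term (S n) k) (/ INR n).
Proof.
  intros Hn. apply is_series_ext with (a := fun k => g n k - g n (S k)).
  { intros k. symmetry. apply tele; auto. }
  apply is_series_Reals. apply is_lim_seq_Reals.
  apply is_lim_seq_ext with (u := fun N => g n 0 - g n (S N)).
  { intros N. symmetry. apply psum. }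
  replace (/ INR n) with (g n 0 - 0).
  2:{ unfold g. replace (8 * INR 0 + 1) with 1 by (simpl; ring). rewrite b1 by auto. simpl. field. apply not_0_INR; lia. }
  apply is_lim_seq_minus'. apply is_lim_seq_const.
  apply (is_lim_seq_incr_1 (g n)). apply g_lim; auto.
Qed.

Definition a n j := (-1)^j * / INR (n+j).

Lemma alt_ex n : (1 <= n)%nat -> exists l, is_series (a n) l /\ 0 <= l <= / INR n.
Proof.
  intros Hn. set (U := fun j => / INR (n+j)).
  assert (Hd: Un_decreasing U).
  { intros j. unfold U. apply Rinv_le_contravar.
    apply lt_0_INR; lia. apply le_INR; lia. }
  assert (Hc: Un_cv U 0).
  { apply is_lim_seq_Reals. unfold U.
    replace (Finite 0) with (Rbar_inv p_infty) by reflexivity.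
    apply is_lim_seq_inv; [|discriminate].
    apply is_lim_seq_ext with (u := fun j => INR (j + n)).
    intros j; f_equal; lia.
    apply (is_lim_seq_incr_n INR n). apply is_lim_seq_INR. }
  destruct (alternated_series U Hd Hc) as [l Hl].
  exists l. split.
  - apply is_series_Reals. exact Hl.
  - pose proof (alternated_series_ineq U l 0 Hd Hc Hl) as [H1 H2].
    simpl in H1, H2. unfold tg_alt, U in H1, H2. simpl in H1, H2.
    rewrite Nat.add_0_r in H1, H2.
    assert (/ INR (n+1) <= / INR n).
    { apply Rinv_le_contravar. apply lt_0_INR; lia. apply le_INR; lia. }
    split; lra.
Qed.

Definition L n := Series (a n).

Lemma L_spec n : (1 <= n)%nat -> is_series (a n) (L n) /\ 0 <= L n <= / INR n.
Proof.
  intros Hn. destruct (alt_ex n Hn) as [l [H1 H2]].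
  unfold L. rewrite (is_series_unique _ _ H1). auto.
Qed.

Lemma L_rec n : (1 <= n)%nat -> L n + L (S n) = / INR n.
Proof.
  intros Hn. destruct (L_spec n Hn) as [H1 _].
  destruct (L_spec (S n) ltac:(lia)) as [H2 _].
  assert (H3: is_series (fun k => a n (S k)) (L n - / INR n)).
  { apply (@is_series_incr_1 R_AbsRing R_NormedModule (a n) (L n - / INR n)).
    unfold plus; simpl. unfold a at 2. rewrite Nat.add_0_r.
    replace (L n - / INR n + (-1)^0 * / INR n) with (L n) by (simpl; ring). exact H1. }
  apply (@is_series_scal R_AbsRing R_NormedModule (-1)) in H2.
  assert (H4: is_series (fun k => a n (S k)) (scal (-1) (L (S n)))).
  { eapply is_series_ext; [|exact H2]. intros k. unfold scal; simpl; unfold mult; simpl.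
    unfold a. replace (n + S k)%nat with (S n + k)%nat by lia. simpl. ring. }
  apply is_series_unique in H3. apply is_series_unique in H4.
  unfold scal in H4; simpl in H4; unfold mult in H4; simpl in H4. lra.
Qed.

Definition A n := F n * Series (bbp_term n).

Lemma A_rec n : (1 <= n)%nat -> A n + A (S n) = / INR n.
Proof.
  intros Hn. unfold A. rewrite <- !Series_scal_l.
  rewrite <- Series_plus by (apply exs; lia).
  apply is_series_unique, tele_series; auto.
Qed.

Definition D n := A n - L n.

Lemma D_bound n : (1 <= n)%nat -> Rabs (D n) <= 4 * / INR n.
Proof.
  intros Hn. pose proof (A_bound n Hn). destruct (L_spec n Hn) as [_ HL].
  unfold D, A. rewrite Rinv_mult in H.
  assert (0 < / INR n) by (apply Rinv_0_lt_compat, lt_0_INR; lia).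
  apply Rabs_le. apply Rabs_le_between in H. lra.
Qed.

Lemma D_const m : Rabs (D (S m)) = Rabs (D 1).
Proof.
  induction m; auto. rewrite <- IHm.
  assert (D (S m) + D (S (S m)) = 0).
  { unfold D. pose proof (A_rec (S m) ltac:(lia)). pose proof (L_rec (S m) ltac:(lia)). lra. }
  replace (D (S (S m))) with (- D (S m)) by lra. apply Rabs_Ropp.
Qed.

Lemma D_zero n : (1 <= n)%nat -> D n = 0.
Proof.
  intros Hn. destruct n as [|m]; [lia|].
  assert (Rabs (D 1) = 0).
  { destruct (Rle_lt_dec (Rabs (D 1)) 0) as [h|h].
    - pose proof (Rabs_pos (D 1)). lra.
    - destruct (archimed_cor1 (Rabs (D 1) / 4) ltac:(lra)) as [N [HN1 HN2]].
      destruct N as [|N']; [lia|].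
      pose proof (D_bound (S N') ltac:(lia)). rewrite D_const in H. lra. }
  pose proof (D_const m). rewrite H in H0. apply Rabs_eq_0 in H0. exact H0.
Qed.

Theorem theorem2 : forall n : nat, (1 <= n)%nat ->
  ex_series (bbp_term n) /\
  is_series (fun j : nat => (-1) ^ (n + j - 1) / INR (n + j))
            ((-1) ^ (n - 1) * INR (fact (2 * n - 1)) * Series (bbp_term n)).
Proof.
  intros n Hn. split. apply exs_bbp; auto.
  destruct (L_spec n Hn) as [H _].
  pose proof (D_zero n Hn) as HD. unfold D in HD.
  apply (@is_series_scal R_AbsRing R_NormedModule ((-1)^(n-1))) in H.
  replace ((-1) ^ (n - 1) * INR (fact (2 * n - 1)) * Series (bbp_term n))
    with (scal ((-1)^(n-1)) (L n)).
  2:{ change (scal ((-1)^(n-1)) (L n)) with ((-1)^(n-1) * L n). unfold A, F in HD.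
      replace (L n) with (INR (fact (2*n-1)) * Series (bbp_term n)) by lra. symmetry; exact (Rmult_assoc _ _ _). }
  eapply is_series_ext; [|exact H]. intros j. unfold scal; simpl; unfold mult; simpl.
  unfold a. replace (n + j - 1)%nat with (n - 1 + j)%nat by lia. rewrite pow_add. unfold Rdiv. ring.
Qed.
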